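(* Let $d\ge 2$, let $G\le \mathrm{Aut}(\mathcal{T}_d)$ be a self-similar group, and let $V_d(G)$ be the corresponding Röver--Nekrashevych group. Then for every finite group $F$, the wreath product $F\wr [V_d(G),V_d(G)]$ embeds into the commutator subgroup $[V_d(G),V_d(G)]$.
   Context: $\mathcal{T}_d$ is the rooted $d$-regular tree with vertex set the finite words $\{1,\dots,d\}^*$, root the empty word, and edges $w$ — $wi$. Every $g\in\mathrm{Aut}(\mathcal{T}_d)$ can be written uniquely as $g=\sigma(g_1,\dots,g_d)$ with $\sigma\in S_d$ and $g_i\in\mathrm{Aut}(\mathcal{T}_d)$, meaning $g(iw)=\sigma(i)g_i(w)$ for all words $w$; the $g_i$ are the level-1 states. $G\le\mathrm{Aut}(\mathcal{T}_d)$ is self-similar if all level-1 states of all elements of $G$ lie in $G$. Let $\mathfrak{C}_d=\{1,\dots,d\}^{\mathbb{N}}$ be the Cantor set of infinite words, on which $\mathrm{Aut}(\mathcal{T}_d)$ acts faithfully by homeomorphisms. For a finite word $w$, the cone $\mathfrak{C}_d(w)=\{w\omega:\omega\in\mathfrak{C}_d\}$ and $h_w:\mathfrak{C}_d\to\mathfrak{C}_d(w)$, $\omega\mapsto w\omega$. The Röver--Nekrashevych group $V_d(G)$ is the group of homeomorphisms $f$ of $\mathfrak{C}_d$ for which there exist partitions of $\mathfrak{C}_d$ into cones $\mathfrak{C}_d(w_1),\dots,\mathfrak{C}_d(w_n)$ and $\mathfrak{C}_d(w_1'),\dots,\mathfrak{C}_d(w_n')$ (same $n$) and elements $g_1,\dots,g_n\in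 G$ such that $f$ restricted to $\mathfrak{C}_d(w_i)$ equals $h_{w_i'}\circ g_i\circ h_{w_i}^{-1}$ for each $i$. For groups $F$ (finite) and $H$, $F\wr H$ denotes the wreath product $H^F\rtimes F$, where $F$ acts on the coordinates of $H^F$ by left translation of $F$ on itself. *)

(* Defs.v *)
From mathcomp Require Import all_boot all_fingroup.
Set Implicit Arguments. Unset Strict Implicit. Unset Printing Implicit Defensive.

(* Vertices of T_d: finite words over {1..d} (here 'I_d). Edges w -- w i. *)
Definition word (d : nat) := seq 'I_d.

Definition tree_adj d (u v : word d) : Prop :=
  (exists i, v = rcons u i) \/ (exists i, u = rcons v i).

Definition is_tree_aut d (g : word d -> word d) : Prop :=
  bijective g /\ forall u v, tree_adj u v <-> tree_adj (g u) (g v).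

(* Level-1 state g_i : g (i w) = sigma(i) g_i(w). *)
Definition state d (g : word d -> word d) (i : 'I_d) : word d -> word d :=
  fun w => behead (g (i :: w)).

Definition is_aut_subgroup d (G : (word d -> word d) -> Prop) : Prop :=
  [/\ forall g, G g -> is_tree_aut g,
      G id,
      forall g h, G g -> G h -> G (g \o h)
    & forall g, G g -> exists h, [/\ G h, cancel g h & cancel h g]].

Definition self_similar d (G : (word d -> word d) -> Prop) : Prop :=
  is_aut_subgroup G /\ forall g i, G g -> G (state g i).

Definition cantor (d : nat) := nat -> 'I_d.

Definition act d (g : word d -> word d) (om : cantor d) : cantor d :=
  fun n => nth (om n) (g (mkseq om n.+1)) n.

Definition cat_word d (w : word d) (om : cantor d) : cantor d :=
  fun k => if k < size w then nth (om 0) w k else om (k - size w).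

Definition in_cone d (w : word d) (om : cantor d) : Prop :=
  exists om', om = cat_word w om'.

Definition cone_partition d n (ws : 'I_n -> word d) : Prop :=
  forall om : cantor d, exists! i : 'I_n, in_cone (ws i) om.

Definition cantor_continuous d (f : cantor d -> cantor d) : Prop :=
  forall om n, exists m, forall om',
    (forall k, k < m -> om' k = om k) -> forall k, k < n -> f om' k = f om k.

Definition is_homeo d (f : cantor d -> cantor d) : Prop :=
  exists g, [/\ cancel f g, cancel g f, cantor_continuous f & cantor_continuous g].

Definition RN d (G : (word d -> word d) -> Prop) (f : cantor d -> cantor d) : Prop :=
  is_homeo f /\
  exists n (ws ws' : 'I_n -> word d) (gs : 'I_n -> word d -> word d),
    [/\ cone_partition ws, cone_partition ws', forall i, G (gs i)
      & forall i om, f (cat_word (ws i) om) = cat_word (ws' i) (act (gs i) om)].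

Inductive commutator_subgroup T (V : (T -> T) -> Prop) : (T -> T) -> Prop :=
  | cs_one : commutator_subgroup V id
  | cs_comm : forall a b ai bi, V a -> V b ->
      cancel a ai -> cancel ai a -> cancel b bi -> cancel bi b ->
      commutator_subgroup V (ai \o bi \o a \o b)
  | cs_mul : forall x y, commutator_subgroup V x -> commutator_subgroup V y ->
      commutator_subgroup V (x \o y)
  | cs_inv : forall x y, commutator_subgroup V x -> cancel x y -> cancel y x ->
      commutator_subgroup V y.

(* Wreath product F wr H = H^F x| F, F acting on H^F by left translation:
   (phi, f) (psi, f') = (x |-> phi x * psi (f^-1 x), f f'). *)
Definition wr_mul (gT : finGroupType) T (p q : (gT -> T -> T) * gT) :
    (gT -> T -> T) * gT :=
  (fun x => p.1 x \o q.1 ((p.2)^-1 * x)%g, (p.2 * q.2)%g).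

Definition wreath_embeds_into (gT : finGroupType) T (K : (T -> T) -> Prop)
    (emb : (gT -> T -> T) * gT -> (T -> T)) : Prop :=
  [/\ forall p, (forall x, K (p.1 x)) -> K (emb p),
      forall p q, (forall x, K (p.1 x)) -> (forall x, K (q.1 x)) ->
        emb p = emb q -> (forall x, p.1 x = q.1 x) /\ p.2 = q.2
    & forall p q, (forall x, K (p.1 x)) -> (forall x, K (q.1 x)) ->
        emb (wr_mul p q) = emb p \o emb q].

(* Main.v *)
Require Import Defs.
From mathcomp Require Import all_boot all_fingroup.
From Stdlib Require Import FunctionalExtensionality ClassicalEpsilon.
Set Implicit Arguments. Unset Strict Implicit. Unset Printing Implicit Defensive.

Section Basics.
Variables (d L : nat).
Definition tk (om : cantor d) : L.-tuple 'I_d := [tuple om i | i < L].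
Definition dr (om : cantor d) : cantor d := fun k => om (k + L).

Lemma tk_cat (t : L.-tuple 'I_d) x : tk (cat_word t x) = t.
Proof.
apply: eq_from_tnth => i; rewrite tnth_mktuple /cat_word size_tuple ltn_ord.
by rewrite (tnth_nth (x 0)).
Qed.

Lemma dr_cat (t : L.-tuple 'I_d) x : dr (cat_word t x) = x.
Proof.
apply: functional_extensionality => k; rewrite /dr /cat_word size_tuple.
by rewrite ltnNge leq_addl /= addnK.
Qed.

Lemma cat_tk_dr om : cat_word (tk om) (dr om) = om.
Proof.
apply: functional_extensionality => k; rewrite /cat_word size_tuple.
case: ltnP => Hk.
  rewrite /tk /= (nth_map (Ordinal Hk)) ?size_enum_ord //.
  by rewrite nth_enum_ord.
by rewrite /dr /= subnK.
Qed.
End Basics.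


Section Mdef.
Variables (d L : nat).
Notation T := (L.-tuple 'I_d).
Definition M (pi : T -> T) (hs : T -> cantor d -> cantor d) (om : cantor d) : cantor d :=
  cat_word (pi (tk L om)) (hs (tk L om) (dr L om)).

Lemma M_cat pi hs (t : T) x : M pi hs (cat_word t x) = cat_word (pi t) (hs t x).
Proof. by rewrite /M tk_cat dr_cat. Qed.

Lemma M_comp pi hs pi' hs' om :
  M pi hs (M pi' hs' om) = M (pi \o pi') (fun t => hs (pi' t) \o hs' t) om.
Proof. by rewrite {1}/M /M tk_cat dr_cat. Qed.

Lemma M_ext pi hs pi' hs' om : (forall t, pi t = pi' t) -> (forall t x, hs t x = hs' t x) ->
  M pi hs om = M pi' hs' om.
Proof. by move=> H1 H2; rewrite /M H1 H2. Qed.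

Lemma M_id om : M id (fun _ => id) om = om.
Proof. exact: cat_tk_dr. Qed.

Lemma M_cancel pi pi' hs hs' : cancel pi pi' -> (forall t, cancel (hs t) (hs' (pi t))) ->
  cancel (M pi hs) (M pi' hs').
Proof.
move=> H1 H2 om; rewrite M_comp -[RHS]M_id; by apply: M_ext => //= t x.

Qed.

Lemma M_cont pi hs : (forall t, cantor_continuous (hs t)) -> cantor_continuous (M pi hs).
Proof.
move=> Hc om n; have [m' Hm'] := Hc (tk L om) (dr L om) n.
exists (L + m') => om' Hag k Hk.
have Htk : tk L om' = tk L om.
  apply: eq_from_tnth => i; rewrite !tnth_mktuple; apply: Hag.
  by apply: leq_trans (ltn_ord i) (leq_addr _ _).
rewrite /M Htk /cat_word; case: ifP => Hlt; first exact: set_nth_default.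
have Hag' : forall j, j < m' -> dr L om' j = dr L om j.
  by move=> j Hj; rewrite /dr; apply: Hag; rewrite addnC ltn_add2l.
exact: (Hm' _ Hag' _ (leq_ltn_trans (leq_subr _ _) Hk)).
Qed.
End Mdef.


Lemma cat_word_cat d (u v : word d) x : cat_word (u ++ v) x = cat_word u (cat_word v x).
Proof.
apply: functional_extensionality => k; rewrite /cat_word size_cat nth_cat.
case: (ltnP k (size u)) => Hk.
  by rewrite (leq_trans Hk (leq_addr _ _)); apply: set_nth_default.

have -> : (k < size u + size v) = (k - size u < size v).
  by rewrite -(subnK Hk) addnK addnC ltn_add2l.
by rewrite subnDA.
Qed.

Lemma in_cone_cat d L (t : L.-tuple 'I_d) (v : word d) om :
  in_cone (tval t ++ v) om <-> tk L om = t /\ in_cone v (dr L om).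
Proof.
split.
  by case=> x ->; rewrite cat_word_cat tk_cat dr_cat; split=> //; exists x.
case=> <- [x Hx]; exists x; rewrite cat_word_cat -Hx; by rewrite cat_tk_dr.
Qed.

Lemma RN_fin d (G : (word d -> word d) -> Prop) (f : cantor d -> cantor d) (I : finType)
  (ws ws' : I -> word d) (gs : I -> word d -> word d) :
  is_homeo f -> (forall om, exists! i, in_cone (ws i) om) ->
  (forall om, exists! i, in_cone (ws' i) om) -> (forall i, G (gs i)) ->
  (forall i om, f (cat_word (ws i) om) = cat_word (ws' i) (Defs.act (gs i) om)) -> RN G f.
Proof.
move=> Hh Hp Hp' Hg He; split=> //.
have tr : forall w : I -> word d, (forall om, exists! i, in_cone (w i) om) ->
    cone_partition (fun j : 'I_#|I| => w (enum_val j)).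
  move=> w Hw om; have [i [Hi Hu]] := Hw om.
  exists (enum_rank i); split; first by rewrite enum_rankK.
  by move=> j Hj; rewrite (Hu _ Hj) enum_valK.
exists #|I|, (fun j => ws (enum_val j)), (fun j => ws' (enum_val j)), (fun j => gs (enum_val j)).
split; [exact: tr | exact: tr | by [] | by move=> j; apply: He].
Qed.

Lemma RN_id d (G : (word d -> word d) -> Prop) : G id -> RN G id.
Proof.
move=> Gid.
have cw0 : forall om : cantor d, cat_word [::] om = om.
  by move=> om; apply: functional_extensionality => k; rewrite /cat_word /= subn0.
apply: (@RN_fin d G id unit (fun _ => [::]) (fun _ => [::]) (fun _ => id)).
- by exists id; split=> // om n; exists n => om' H k Hk; apply: H.
- by move=> om; exists tt; split=> [|[] _ //]; exists om; rewrite cw0.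
- by move=> om; exists tt; split=> [|[] _ //]; exists om; rewrite cw0.
- by [].
move=> _ om; rewrite !cw0; apply: functional_extensionality => k.
by rewrite /Defs.act nth_mkseq.
Qed.


Record pieces d := Pieces { pn : nat; pws : 'I_pn -> word d; pws' : 'I_pn -> word d;
  pgs : 'I_pn -> word d -> word d }.
Arguments pws {d} p _.
Arguments pws' {d} p _.
Arguments pgs {d} p _ _.

Definition pieces_ok d (G : (word d -> word d) -> Prop) (h : cantor d -> cantor d) (r : pieces d) :=
  [/\ cone_partition (pws r), cone_partition (pws' r), forall i, G (pgs r i)
    & forall i om, h (cat_word (pws r i) om) = cat_word (pws' r i) (Defs.act (pgs r i) om)].

Lemma choiceT (A : Type) (B : Type) (P : A -> B -> Prop) :
  (forall a, exists b, P a b) -> exists f : A -> B, forall a, P a (f a).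
Proof.
move=> H; exists (fun a => proj1_sig (constructive_indefinite_description _ (H a))).
by move=> a; exact: proj2_sig (constructive_indefinite_description _ (H a)).
Qed.

Section RNM.
Variables (d L : nat) (G : (word d -> word d) -> Prop).
Notation T := (L.-tuple 'I_d).

Lemma RN_M (pi : T -> T) (hs : T -> cantor d -> cantor d) :
  bijective pi -> (forall t, RN G (hs t)) -> RN G (M pi hs).
Proof.
move=> [pinv Hp1 Hp2] HR.
have [hinv Hinv] : exists hinv : T -> cantor d -> cantor d, forall t,
    [/\ cancel (hs t) (hinv t), cancel (hinv t) (hs t), cantor_continuous (hs t)
      & cantor_continuous (hinv t)].
  have Hex : forall t, exists g, [/\ cancel (hs t) g, cancel g (hs t), cantor_continuous (hs t)
      & cantor_continuous g].
    by move=> t; have [[g Hg] _] := HR t; exists g.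
  exact: choiceT Hex.
have [R HRok] : exists R : T -> pieces d, forall t, pieces_ok G (hs t) (R t).
  have Hex : forall t, exists r, pieces_ok G (hs t) r.
    move=> t; have [_ [n [ws [ws' [gs [H1 H2 H3 H4]]]]]] := HR t.
    by exists (@Pieces d n ws ws' gs); split.
  exact: choiceT Hex.
pose I := {t : T & 'I_(pn (R t))}.
apply: (@RN_fin d G _ I (fun s => tval (tag s) ++ pws (R (tag s)) (tagged s))
   (fun s => tval (pi (tag s)) ++ pws' (R (tag s)) (tagged s))
   (fun s => pgs (R (tag s)) (tagged s))).
- exists (M pinv (fun t => hinv (pinv t))); split.
  + apply: M_cancel => // t; rewrite Hp1; by case: (Hinv t).
  + apply: M_cancel => // t; by case: (Hinv (pinv t)).
  + by apply: M_cont => t; case: (Hinv t).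
  + by apply: M_cont => t; case: (Hinv (pinv t)).
- move=> om; have [Hpart _ _ _] := HRok (tk L om).
  have [i [Hi Hu]] := Hpart (dr L om).
  exists (Tagged (fun t => 'I_(pn (R t))) i); split.
    by apply/in_cone_cat.
  case=> t' i' /= /in_cone_cat [Ht' Hc]; subst t'.
  by rewrite (Hu _ Hc).
- move=> om; have [_ Hpart _ _] := HRok (pinv (tk L om)).
  have [i [Hi Hu]] := Hpart (dr L om).
  exists (Tagged (fun t => 'I_(pn (R t))) i); split.
    by apply/in_cone_cat; rewrite /= Hp2.
  case=> t' i' /= /in_cone_cat [Ht' Hc].
  have E : t' = pinv (tk L om) by rewrite Ht' Hp1.
  subst t'; by rewrite (Hu _ Hc).
- by move=> [t i] /=; case: (HRok t).
move=> [t i] om /=.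
rewrite cat_word_cat M_cat cat_word_cat; congr cat_word.
by case: (HRok t) => _ _ _ ->.
Qed.
End RNM.


Section KM.
Variables (d L : nat) (G : (word d -> word d) -> Prop).
Hypothesis Gid : G id.
Notation T := (L.-tuple 'I_d).
Notation K := (commutator_subgroup (RN G)).
Notation M1 := (@M d L id).

Definition single (t0 : T) (h : cantor d -> cantor d) : T -> cantor d -> cantor d :=
  fun t => if t == t0 then h else id.

Lemma M1_comp hs hs' : M1 hs \o M1 hs' = M1 (fun t => hs t \o hs' t).
Proof. by apply: functional_extensionality => om /=; rewrite M_comp. Qed.

Lemma single_comp t0 a b : (fun t => single t0 a t \o single t0 b t) = single t0 (a \o b).
Proof.
apply: functional_extensionality => t; rewrite /single; case: (t == t0) => //.
Qed.

Lemma RN_single t0 a : RN G a -> RN G (M1 (single t0 a)).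
Proof.
move=> Ha; apply: RN_M; first by exists id.
by move=> t; rewrite /single; case: (t == t0) => //; apply: RN_id.
Qed.

Lemma cancel_single t0 a b : cancel a b -> cancel (M1 (single t0 a)) (M1 (single t0 b)).
Proof. by move=> H; apply: M_cancel => // t; rewrite /single; case: (t == t0). Qed.

Lemma M_single_comp t0 a b : M1 (single t0 (a \o b)) = M1 (single t0 a) \o M1 (single t0 b).
Proof. by rewrite M1_comp single_comp. Qed.

Lemma K_shrink t0 h : K h -> K (M1 (single t0 h)).
Proof.
elim=> {h}.
- have -> : M1 (single t0 id) = id.
    apply: functional_extensionality => om; rewrite -[RHS](M_id L om).
    by apply: M_ext => // t x; rewrite /single; case: (t == t0).
  exact: cs_one.
- move=> a b ai bi Va Vb Ha Hai Hb Hbi.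
  rewrite (M_single_comp _ (ai \o bi \o a)) (M_single_comp _ (ai \o bi)) (M_single_comp _ ai).
  apply: cs_comm; [exact: RN_single | exact: RN_single | exact: cancel_single
    | exact: cancel_single | exact: cancel_single | exact: cancel_single].
- move=> x y _ IHx _ IHy; rewrite M_single_comp; exact: cs_mul.
- move=> x y _ IHx Hxy Hyx; apply: cs_inv IHx _ _; exact: cancel_single.
Qed.

Lemma K_M1 (hs : T -> cantor d -> cantor d) : (forall t, K (hs t)) -> K (M1 hs).
Proof.
move=> HK.
suff : forall s : seq T, forall hs, (forall t, K (hs t)) -> (forall t, t \notin s -> hs t = id) ->
  K (M1 hs) by move/(_ (enum [set: T]) hs HK); apply=> t; rewrite mem_enum in_setT.
elim=> [|t0 s IH] {}hs {}HK Hsupp.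
  have -> : M1 hs = id.
    apply: functional_extensionality => om; rewrite -[RHS](M_id L om).
    by apply: M_ext => // t x; rewrite Hsupp.
  exact: cs_one.
pose hs' t := if t == t0 then id else hs t.
have -> : M1 hs = M1 (single t0 (hs t0)) \o M1 hs'.
  rewrite M1_comp; apply: functional_extensionality => om; apply: M_ext => // t x.
  by rewrite /single /hs'; case: eqP => [->|].
apply: cs_mul; first exact: K_shrink.
apply: IH.
  by move=> t; rewrite /hs'; case: (t == t0); [exact: cs_one | exact: HK].
move=> t Hs; rewrite /hs'; case: eqP => // Ht; apply: Hsupp.
by rewrite in_cons negb_or Hs andbT; apply/eqP.
Qed.
End KM.


Section Wreath.
Variables (gT : finGroupType) (d' : nat).
Local Notation d := d'.+2.
Local Notation X := (gT * gT)%type.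
Definition LL := #|{: X}|.
Local Notation T := (LL.-tuple 'I_d).

Definition code (z : X) : T := [tuple (if (i : nat) == enum_rank z then ord_max else ord0) | i < LL].

Lemma code_inj : injective code.
Proof.
move=> z z' E.
have := congr1 (fun t : T => tnth t (Ordinal (ltn_ord (enum_rank z)))) E.
rewrite !tnth_mktuple /= eqxx; case: eqP => [/val_inj/enum_rank_inj //|_ /eqP].
by rewrite -(inj_eq val_inj).
Qed.

Lemma pick_code z : [pick z' | code z' == code z] = Some z.
Proof.
case: pickP => [z' /eqP/code_inj -> //|H]; by have := H z; rewrite eqxx.
Qed.

Lemma codeP (t : T) : (exists z, t = code z) \/ [pick z | code z == t] = None.
Proof. case: pickP => [z /eqP <-|H]; [left; by exists z | by right]. Qed.

Definition ext (rho : X -> X) (t : T) : T :=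
  if [pick z | code z == t] is Some z then code (rho z) else t.

Lemma ext_code rho z : ext rho (code z) = code (rho z).
Proof. by rewrite /ext pick_code. Qed.

Lemma ext_out rho t : [pick z | code z == t] = None -> ext rho t = t.
Proof. by rewrite /ext => ->. Qed.

Lemma ext_cancel rho rho' : cancel rho rho' -> cancel (ext rho) (ext rho').
Proof.
move=> H t; case: (codeP t) => [[z ->]|Hn]; first by rewrite !ext_code H.
by rewrite !ext_out.
Qed.

Definition Hf (phi : gT -> cantor d -> cantor d) (t : T) : cantor d -> cantor d :=
  if [pick z | code z == t] is Some z then (if z.2 == 1%g then phi z.1 else id) else id.

Lemma Hf_code phi z : Hf phi (code z) = if z.2 == 1%g then phi z.1 else id.
Proof. by rewrite /Hf pick_code. Qed.

Lemma Hf_out phi t : [pick z | code z == t] = None -> Hf phi t = id.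
Proof. by rewrite /Hf => ->. Qed.

Definition rho (f : gT) (z : X) : X := ((f * z.1)%g, z.2).
Definition sigma (f : gT) := M (ext (rho f)) (fun _ => id).
Definition Phi (phi : gT -> cantor d -> cantor d) := M (@id T) (Hf phi).
Definition emb (p : (gT -> cantor d -> cantor d) * gT) := Phi p.1 \o sigma p.2.

Lemma emb_hom p q : emb (wr_mul p q) = emb p \o emb q.
Proof.
apply: functional_extensionality => om; rewrite /emb /Phi /sigma /= !M_comp.
apply: M_ext => [t|t x] /=.
  case: (codeP t) => [[z ->]|Hn]; first by rewrite !ext_code /rho /= mulgA.
  by rewrite !ext_out.
case: (codeP t) => [[z ->]|Hn].
  rewrite !ext_code !Hf_code /rho /=; case: (z.2 == 1%g) => //=.
  by rewrite -mulgA mulKg.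
by rewrite !ext_out // !Hf_out.
Qed.

Lemma emb_cat p z om : emb p (cat_word (code z) om) =
  cat_word (code (rho p.2 z)) (if z.2 == 1%g then p.1 (p.2 * z.1)%g om else om).
Proof.
rewrite /emb /Phi /sigma /comp M_cat ext_code M_cat Hf_code /rho /=.
by case: eqP.
Qed.

Lemma emb_inj p q : emb p = emb q -> (forall x, p.1 x = q.1 x) /\ p.2 = q.2.
Proof.
move=> E.
pose om0 : cantor d := fun _ => ord0.
have E2 : p.2 = q.2.
  have := congr1 (fun f => tk LL (f (cat_word (code (1%g, 1%g)) om0))) E.
  by rewrite !emb_cat !tk_cat /rho /= !mulg1 => /code_inj [].
split=> // x; apply: functional_extensionality => om.
have := congr1 (fun f => dr LL (f (cat_word (code ((p.2^-1 * x)%g, 1%g)) om))) E.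
by rewrite !emb_cat !dr_cat /= eqxx -E2 mulKVg.
Qed.

Section KWreath.
Variable (G : (word d -> word d) -> Prop).
Hypothesis Gid : G id.
Local Notation K := (commutator_subgroup (RN G)).

Definition P (pi : T -> T) := M pi (fun _ : T => @id (cantor d)).

Lemma RN_P rho rho' : cancel rho rho' -> cancel rho' rho -> RN G (P (ext rho)).
Proof.
move=> H1 H2; apply: RN_M; first by exists (ext rho'); apply: ext_cancel.
by move=> _; apply: RN_id.
Qed.

Lemma P_cancel rho rho' : cancel rho rho' -> cancel (P (ext rho)) (P (ext rho')).
Proof. by move=> H; apply: M_cancel => //; apply: ext_cancel. Qed.

Definition alpha (f : gT) (z : X) : X := (z.1, (f * z.2)%g).
Definition beta (z : X) : X := ((z.1^-1 * z.2)%g, z.2).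
Definition betai (z : X) : X := ((z.2 * z.1^-1)%g, z.2).

Lemma alphaK f : cancel (alpha f) (alpha f^-1).
Proof. by case=> x y; rewrite /alpha /= mulKg. Qed.
Lemma alphaKV f : cancel (alpha f^-1) (alpha f).
Proof. by case=> x y; rewrite /alpha /= mulKVg. Qed.
Lemma betaK : cancel beta betai.
Proof. by case=> x y; rewrite /beta /betai /= invMg invgK mulgA mulgV mul1g. Qed.
Lemma betaKV : cancel betai beta.
Proof. by case=> x y; rewrite /beta /betai /= invMg invgK -mulgA mulVg mulg1. Qed.

Lemma K_sigma f : K (sigma f).
Proof.
have -> : sigma f = P (ext (alpha f^-1)) \o P (ext betai) \o P (ext (alpha f)) \o P (ext beta).
  apply: functional_extensionality => om; rewrite /sigma /P /comp !M_comp.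
  apply: M_ext => // t; rewrite /comp.
  case: (codeP t) => [[[x y] ->]|Hn]; last by rewrite !ext_out.
  rewrite !ext_code /rho /alpha /beta /betai /=; congr (code (_, _)).
    by rewrite invMg invgK mulgA mulgK.
  by rewrite mulKg.
apply: cs_comm.
- exact: (RN_P (alphaK f) (alphaKV f)).
- exact: (RN_P betaK betaKV).
- exact: P_cancel (alphaK f).
- exact: P_cancel (alphaKV f).
- exact: P_cancel betaK.
- exact: P_cancel betaKV.
Qed.

Lemma K_emb p : (forall x, K (p.1 x)) -> K (emb p).
Proof.
move=> HK; apply: cs_mul; last exact: K_sigma.
apply: (K_M1 Gid) => t; rewrite /Hf; case: pickP => [z _|_]; last exact: cs_one.
by case: (z.2 == 1%g); [apply: HK | exact: cs_one].
Qed.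
End KWreath.
End Wreath.

Theorem proposition2p5 (d : nat) (G : (word d -> word d) -> Prop)
    (gT : finGroupType) :
  2 <= d -> self_similar G ->
  exists emb : (gT -> cantor d -> cantor d) * gT -> (cantor d -> cantor d),
    wreath_embeds_into (commutator_subgroup (RN G)) emb.
Proof.
case: d G => [|[|d']] G // _ [[_ Gid _ _] _].
exists (@emb gT d'); split.
- by move=> p; apply: (K_emb Gid).
- by move=> p q _ _; apply: emb_inj.
- by move=> p q _ _; apply: emb_hom.
Qed.
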